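(* Let $p,q$ be positive integers with $p/q\ge4$, let $k=\lfloor p/q\rfloor$ and $r=p-kq$, and assume $r\ge1$. Let $t$ be the smallest positive integer with $(t+1)q\equiv r\pmod p$. Consider a graph containing an edge $uv$ together with two paths $P_{uv}=u\,x_0^{uv}x_1^{uv}\cdots x_t^{uv}\,v$ and $P_{vu}=v\,x_0^{vu}x_1^{vu}\cdots x_t^{vu}\,u$. Assign lists $L(x_0^{ab})=L(x_t^{ab})=[p-1,2q-1]$ and $L(x_i^{ab})=[iq,(i+2)q-1]$ for $1\le i\le t-1$, for $(a,b)\in\{(u,v),(v,u)\}$. If $\psi$ is a $(p,q)$-colouring of $P_{uv}\cup P_{vu}$ (including the edge $uv$) such that $\psi(x)\in L(x)$ for every internal vertex $x$ of the two paths, then $\psi(u)$ and $\psi(v)$ are not both contained in $S_0=[0,q+r-1]$.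
   Context: A $(p,q)$-colouring of a graph is a map $\psi$ from its vertex set to $\{0,\dots,p-1\}$ with $q\le|\psi(x)-\psi(y)|\le p-q$ for every edge $xy$. For $a,b\in\{0,\dots,p-1\}$ the interval $[a,b]$ denotes $\{a,a+1,\dots,b\}$ with arithmetic modulo $p$ (so e.g. $[p-1,2q-1]=\{p-1,0,1,\dots,2q-1\}$); all numbers appearing as interval endpoints are reduced modulo $p$. *)

(* Defs.v *)
From mathcomp Require Import all_boot.
Set Implicit Arguments. Unset Strict Implicit. Unset Printing Implicit Defensive.

Definition absdiff (a b : nat) : nat := (a - b) + (b - a).

Definition pq_edge (p q a b : nat) : bool :=
  [&& a < p, b < p, q <= absdiff a b & absdiff a b <= p - q].

(* cyclic interval [a,b] = {a, a+1, ..., b} modulo p, endpoints reduced mod p *)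
Definition in_cint (p a b x : nat) : bool :=
  (x < p) &&
  (if a %% p <= b %% p then (a %% p <= x) && (x <= b %% p)
   else (a %% p <= x) || (x <= b %% p)).

(* psi is a (p,q)-colouring of P_uv ∪ P_vu (including the edge uv), where
   P_uv = u xuv_0 ... xuv_t v and P_vu = v xvu_0 ... xvu_t u. *)
Definition pq_colouring_paths (T : Type) (p q t : nat) (psi : T -> nat)
    (u v : T) (xuv xvu : nat -> T) : Prop :=
  [/\ pq_edge p q (psi u) (psi v),
      pq_edge p q (psi u) (psi (xuv 0)),
      (forall i, i < t -> pq_edge p q (psi (xuv i)) (psi (xuv i.+1))) &
      pq_edge p q (psi (xuv t)) (psi v)] /\
  [/\ pq_edge p q (psi v) (psi (xvu 0)),
      (forall i, i < t -> pq_edge p q (psi (xvu i)) (psi (xvu i.+1))) &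
      pq_edge p q (psi (xvu t)) (psi u)].

Definition respects_lists (T : Type) (p q t : nat) (psi : T -> nat)
    (x : nat -> T) : Prop :=
  [/\ in_cint p (p - 1) (2 * q - 1) (psi (x 0)),
      in_cint p (p - 1) (2 * q - 1) (psi (x t)) &
      (forall i, 1 <= i <= t - 1 -> in_cint p (i * q) ((i + 2) * q - 1) (psi (x i)))].

(* Main.v *)
Require Import Defs.
From mathcomp Require Import all_boot zify.

Lemma modcase a p : 0 < p -> a < p + p ->
  (a < p /\ a %% p = a) \/ (p <= a /\ a %% p = a - p).
Proof.
move=> p0 ha; case: (ltnP a p) => h.
  by left; rewrite modn_small.
right; split=> //.
have -> : a = (a - p) + p by lia.
by rewrite modnDr modn_small; lia.
Qed.

Lemma off_lem p A B c L x : 0 < L <= p -> c < p -> A %% p = c ->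
  B %% p = (c + L - 1) %% p -> in_cint p A B x ->
  (x + p - c) %% p < L /\ x = (c + (x + p - c) %% p) %% p.
Proof.
move=> hL hc hA hB; rewrite /in_cint hA hB => /andP[hx]; clear hA hB A.
have p0 : 0 < p by lia.
have [[h1 ->]|[h1 ->]] := modcase (c + L - 1) p p0 ltac:(lia);
have [[h2 ->]|[h2 ->]] := modcase (x + p - c) p p0 ltac:(lia);
case: ifP => hi;
try (move=> /andP[? ?]); try (move=> /orP[?|?]); try lia;
  (split; [lia|]);
  first [ have -> : c + (x + p - c) = x + p by lia
        | have -> : c + (x + p - c - p) = x by lia ];
  rewrite ?modnDr ?modn_small //.
Qed.

Lemma step_lem p q c o1 o2 : 0 < q -> 4 * q <= p -> c < p -> o1 < 2 * q -> o2 < 2 * q ->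
  pq_edge p q ((c + o1) %% p) (((c + q) %% p + o2) %% p) -> o1 <= o2.
Proof.
move=> q0 hp hc h1 h2.
have p0 : 0 < p by lia.
have [[e1 ->]|[e1 ->]] := modcase (c + o1) p p0 ltac:(lia);
have [[e2 ->]|[e2 ->]] := modcase (c + q) p p0 ltac:(lia).
- have [[e3 ->]|[e3 ->]] := modcase (c + q + o2) p p0 ltac:(lia);
  rewrite /pq_edge /absdiff => /and4P[? ? ? ?]; lia.
- have [[e3 ->]|[e3 ->]] := modcase (c + q - p + o2) p p0 ltac:(lia);
  rewrite /pq_edge /absdiff => /and4P[? ? ? ?]; lia.
- have [[e3 ->]|[e3 ->]] := modcase (c + q + o2) p p0 ltac:(lia);
  rewrite /pq_edge /absdiff => /and4P[? ? ? ?]; lia.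
- have [[e3 ->]|[e3 ->]] := modcase (c + q - p + o2) p p0 ltac:(lia);
  rewrite /pq_edge /absdiff => /and4P[? ? ? ?]; lia.
Qed.


Lemma base_lem p q a y o : 0 < q -> 4 * q <= p -> o < 2 * q ->
  a + q <= y <= 2 * q - 1 -> pq_edge p q y ((q + o) %% p) -> a + q <= o.
Proof.
move=> q0 hp ho hy.
have p0 : 0 < p by lia.
have [[e1 ->]|[e1 ->]] := modcase (q + o) p p0 ltac:(lia);
rewrite /pq_edge /absdiff => /and4P[? ? ? ?]; lia.
Qed.

Lemma end_lem p q r a o z b : 0 < q -> 4 * q <= p -> 1 <= r -> r < q -> a < r ->
  a + q <= o < 2 * q -> q <= b <= q + r - 1 -> z < p -> (p - 1 <= z) || (z <= 2 * q - 1) ->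
  pq_edge p q ((r + p - 2 * q + o) %% p) z -> pq_edge p q z b -> False.
Proof.
move=> q0 hp r1 rq ha ho hb hz hz2.
have p0 : 0 < p by lia.
have [[e1 ->]|[e1 ->]] := modcase (r + p - 2 * q + o) p p0 ltac:(lia);
rewrite /pq_edge /absdiff => /and4P[? ? ? ?] /and4P[? ? ? ?];
case/orP: hz2 => ?; lia.
Qed.

Lemma main_dir p q r t (T : Type) (psi : T -> nat) (u v : T) (x : nat -> T) :
  0 < q -> 4 * q <= p -> 1 <= r -> r < q -> 1 < t ->
  ((t - 1) * q) %% p = r + p - 2 * q ->
  psi u < r -> q <= psi v <= q + r - 1 ->
  pq_edge p q (psi u) (psi (x 0)) ->
  (forall i, i < t -> pq_edge p q (psi (x i)) (psi (x i.+1))) ->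
  pq_edge p q (psi (x t)) (psi v) ->
  respects_lists p q t psi x -> False.
Proof.
move=> q0 hp r1 rq t1 + hu hv e0 ei et [l0 lt li].
have p0 : 0 < p by lia.
have hm1 : (p - 1) %% p = p - 1 by rewrite modn_small; lia.
have hm2 : (2 * q - 1) %% p = 2 * q - 1 by rewrite modn_small; lia.
move: l0 lt; rewrite /in_cint hm1 hm2.
have -> : (p - 1 <= 2 * q - 1) = false by apply/negbTE; lia.
move=> /andP[l0a l0b] /andP[lta ltb].
have hx0 : psi u + q <= psi (x 0) <= 2 * q - 1.
  move: e0; rewrite /pq_edge /absdiff => /and4P[? ? ? ?].
  case/orP: l0b => ?; lia.
have hoff : forall i, 1 <= i <= t - 1 ->
   (psi (x i) + p - (i * q) %% p) %% p < 2 * q /\ psi (x i) = ((i * q) %% p + (psi (x i) + p - (i * q) %% p) %% p) %% p.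
  move=> i hi; apply: (off_lem p (i * q) ((i + 2) * q - 1) ((i * q) %% p) (2 * q)) => //.
  - clear -q0 hp; lia.
  - by apply: ltn_pmod.
  - have -> : (i + 2) * q - 1 = i * q + (2 * q - 1) by clear -q0; rewrite mulnDl; lia.
    rewrite -modnDml; congr (_ %% _); clear -q0; lia.
  - exact: li.
have hind : forall i, 1 <= i <= t - 1 ->
    psi u + q <= (psi (x i) + p - (i * q) %% p) %% p.
  elim=> [|i IH] hi; first by exfalso; case/andP: hi.
  case: (posnP i) => [i0|ipos].
    subst i.
    have [ho1 hx1] := hoff 1 hi.
    have hq : (1 * q) %% p = q by rewrite mul1n modn_small //; clear -q0 hp; lia.
    move: hx1 ho1; rewrite hq.
    move: ((psi (x 1) + p - q) %% p) => o hx1 ho1.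
    have := ei 0 (ltnW t1); rewrite hx1.
    exact: base_lem q0 hp ho1 hx0.
  have hi' : 1 <= i <= t - 1 by clear -hi ipos; lia.
  have IHi := IH hi'.
  have [hoi hxi] := hoff i hi'.
  have [hoi1 hxi1] := hoff i.+1 hi.
  have hc1 : (i.+1 * q) %% p = ((i * q) %% p + q) %% p by rewrite modnDml mulSn addnC.
  rewrite hc1 in hoi1 hxi1 *.
  have hei := ei i (ltac:(clear -hi; lia)).
  clear IH hoff hi hc1 hx0.
  move: ((i * q) %% p) (ltn_pmod (i * q) p0) hoi hxi IHi hoi1 hxi1 => c hc hoi hxi IHi hoi1 hxi1.
  move: ((psi (x i) + p - c) %% p) hoi hxi IHi => o1 hoi hxi IHi.
  move: ((psi (x i.+1) + p - (c + q) %% p) %% p) hoi1 hxi1 => o2 hoi1 hxi1.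
  move: hei; rewrite hxi hxi1 => /(step_lem p q c o1 o2 q0 hp hc hoi hoi1).
  clear -IHi; lia.
have ht1 : 1 <= t - 1 <= t - 1 by clear -t1; lia.
have [hot hxt] := hoff (t - 1) ht1.
have hit := hind (t - 1) ht1.
have := ei (t - 1) (ltac:(clear -t1; lia)).
have -> : (t - 1).+1 = t by clear -t1; lia.
move=> e1 hct; move: hct hot hit hxt e1.
move: ((t - 1) * q %% p) => c hct; rewrite hct.
move: ((psi (x (t - 1)) + p - (r + p - 2 * q)) %% p) => o hot hit hxt.
rewrite hxt => e1.
by apply: (end_lem p q r (psi u) o (psi (x t)) (psi v) q0 hp r1 rq hu _ hv lta ltb e1 et); clear -hot hit; lia.
Qed.

Theorem proposition3p2 (p q k r t : nat) (T : Type) (psi : T -> nat)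
    (u v : T) (xuv xvu : nat -> T) :
  0 < q -> 4 * q <= p ->
  k = p %/ q -> r = p - k * q -> 1 <= r ->
  0 < t -> (t.+1 * q == r %[mod p]) ->
  (forall s, 0 < s < t -> (s.+1 * q != r %[mod p])) ->
  pq_colouring_paths p q t psi u v xuv xvu ->
  respects_lists p q t psi xuv ->
  respects_lists p q t psi xvu ->
  ~ (in_cint p 0 (q + r - 1) (psi u) && in_cint p 0 (q + r - 1) (psi v)).
Proof.
move=> q0 hp hk hr r1 ht hcong _ [[euv eu0 eui eut] [ev0 evi evt]] hl1 hl2.
have hrq : r = p %% q by rewrite hr hk {1}(divn_eq p q) addKn.
have rq : r < q by rewrite hrq ltn_pmod.
clear hrq hr hk.
have p0 : 0 < p by lia.
have hrp : r %% p = r by rewrite modn_small //; lia.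
move/eqP: hcong; rewrite hrp => hcong.
have t1 : 1 < t.
  case: (ltnP 1 t) => // t1; have et : t = 1 by lia.
  move: hcong; rewrite et modn_small; clear -q0 hp rq; lia.
have hct : ((t - 1) * q) %% p = r + p - 2 * q.
  move: hcong; have -> : t.+1 * q = (t - 1) * q + 2 * q.
    by rewrite -mulnDl; congr (_ * _); clear -ht; lia.
  rewrite -modnDml.
  have := ltn_pmod ((t - 1) * q) p0; move: ((t - 1) * q %% p) => m hm.
  clear hrp; have [[e1 ->]|[e1 ->]] := modcase (m + 2 * q) p p0 ltac:(lia); lia.
clear hcong hrp.
have hq : (q + r - 1) %% p = q + r - 1 by rewrite modn_small //; lia.
rewrite /in_cint mod0n hq /=; clear hq => /andP[/andP[hu1 hu2] /andP[hv1 hv2]].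
move: euv; rewrite /pq_edge /absdiff => /and4P[_ _ ea eb].
case: (ltnP (psi u) (psi v)) => huv.
  apply: (main_dir p q r t T psi u v xuv q0 hp r1 rq t1 hct _ _ eu0 eui eut hl1); clear -ea eb huv hu2 hv2 rq; lia.
apply: (main_dir p q r t T psi v u xvu q0 hp r1 rq t1 hct _ _ ev0 evi evt hl2); clear -ea eb huv hu2 hv2 rq; lia.
Qed.
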